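(* Assume the model (M.2) with $M_0>1$ and the sub-Gaussian condition (A.4) described in the context, and let Algorithm 2 be applied to $X_1,\ldots,X_N$. Let $k\in\{2,\ldots,M_0\}$ and let $\eta=\eta(N)$ be an integer with $1\le\eta\le\min\{N_{k-1},N_{k+1}\}$. Let $E_{k,N}$ be the event that there exist integers $1\le n_1\le N_k$, $1\le n_2\le\eta$, $1\le n_3\le\eta$ such that $\{X^{(k-1)}_n:n=N_{k-1}-n_3+1,\ldots,N_{k-1}\}\cup\{X^{(k)}_n:n=1,\ldots,n_1\}$ and $\{X^{(k)}_n:n=n_1+1,\ldots,N_k\}\cup\{X^{(k+1)}_n:n=1,\ldots,n_2\}$ are two detected segments. Assume $$f(N)\ge\max\{100|\mu_{k-1}-\mu_k|^2\eta,\ 100|\mu_k-\mu_{k+1}|^2\eta,\ C\log N\},$$ where $C>100D/c_0$ is a constant. Then $\Pr(\limsup_{N\to\infty}E_{k,N})=0$.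
   Context: Model (M.2): for each sample size $N$ one observes independent random vectors $X_1,\ldots,X_N\in\mathbb{R}^D$ ($D\in\mathbb{N}$ fixed). There are $M_0\ge 0$ (fixed) change points $0=L_0<L_1<\cdots<L_{M_0}<L_{M_0+1}=N$ (depending on $N$), with segment sizes $N_k=L_k-L_{k-1}$, $N_k\to\infty$; for each $k$, $X_{L_{k-1}+1},\ldots,X_{L_k}$ are i.i.d. with distribution $\mathcal{G}_k$ with mean $\mu_k$ and finite covariance; $\mu_k\neq\mu_{k+1}$. Write $X^{(k)}_n=X_{L_{k-1}+n}$, $n=1,\ldots,N_k$. (A.4): there is $c_0>0$ such that for every $k$, coordinate $d$, $n\ge1$ and $a>0$, the mean $\bar Z$ of $n$ i.i.d. copies of the $d$-th marginal of $\mathcal{G}_k$ satisfies $\Pr(|\bar Z-E\bar Z|\ge a)\le2e^{-c_0a^2n}$. Quadratic loss: $\mathrm{Loss}_q(x_a,\ldots,x_b)=\sum_{n=a}^b|x_n-\bar x|^2$, $\bar x$ the sample mean, $|\cdot|$ Euclidean norm. Algorithm 2 (inputs $M_{\max}\ge1$, penalty $f(N)>0$, minimal segment size $\beta(N)$): for $k=0,1,\ldots,M_{\max}$ compute $\hat e_k=\min\sum_{j=1}^{k+1}\mathrm{Loss}_q(x_{\ell_{j-1}+1},\ldots,x_{\ell_j})$ over $0=\ell_0<\ell_1<\cdots<\ell_{k+1}=N$ with a minimizer; if its smallest segment has size $<\beta(N)$, set $M=k-1$ and stop (else $M=M_{\max}$). Output $\hat M=\arg\min_{0\le k\le M}(\hat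 e_k+kf(N))$ and the change points $\hat\ell_1<\cdots<\hat\ell_{\hat M}$ of the minimizer for $k=\hat M$. The detected segments are the blocks $\{X_n:n=\hat\ell_{j-1}+1,\ldots,\hat\ell_j\}$, $j=1,\ldots,\hat M+1$ ($\hat\ell_0=0,\hat\ell_{\hat M+1}=N$); ''two detected segments'' means two neighboring ones, in the order listed. $\limsup_N E_N$ is the event that $E_N$ occurs for infinitely many $N$. *)

(* Defs.v *)
From HB Require Import structures.
From mathcomp Require Import all_boot all_order all_algebra.
From mathcomp Require Import all_classical all_reals all_analysis.
Set Implicit Arguments. Unset Strict Implicit. Unset Printing Implicit Defensive.
Import Order.TTheory GRing.Theory Num.Theory.
Local Open Scope classical_set_scope.
Local Open Scope ring_scope.

Section Defs.
Variable R : realType.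

(** Vectors of R^D are represented by D.-tuple R (which carries the product
    sigma-algebra generated by the coordinate projections). *)

Definition sqdist (D : nat) (u v : D.-tuple R) : R :=
  \sum_(i < D) (tnth u i - tnth v i) ^+ 2.

(** Data are 1-indexed: x 1, ..., x N. *)
Definition seg_mean (D : nat) (x : nat -> D.-tuple R) (a b : nat) : D.-tuple R :=
  [tuple (\sum_(a <= n < b.+1) tnth (x n) i) / (b.+1 - a)%:R | i < D].

Definition Loss_q (D : nat) (x : nat -> D.-tuple R) (a b : nat) : R :=
  \sum_(a <= n < b.+1) sqdist (x n) (seg_mean x a b).

Definition bounds (N : nat) (l : seq nat) : seq nat := 0%N :: l ++ [:: N].

Definition valid_partition (N k : nat) (l : seq nat) : Prop :=
  size l = k /\ sorted ltn (bounds N l).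

Definition cost (D : nat) (x : nat -> D.-tuple R) (N : nat) (l : seq nat) : R :=
  \sum_(j < (size l).+1)
     Loss_q x (nth 0%N (bounds N l) j).+1 (nth 0%N (bounds N l) j.+1).

Definition is_minimizer (D : nat) (x : nat -> D.-tuple R) (N k : nat)
  (l : seq nat) : Prop :=
  valid_partition N k l /\
  forall l', valid_partition N k l' -> cost x N l <= cost x N l'.

Definition small_segment (N : nat) (l : seq nat) (beta : R) : Prop :=
  exists j, (j < (size l).+1)%N /\
    ((nth 0%N (bounds N l) j.+1 - nth 0%N (bounds N l) j)%:R < beta).

(** (Mhat, lhat) is an output of Algorithm 2 (for some admissible choice of
    minimizers, i.e. some tie-breaking rule) on data x_1..x_N. *)
Definition Alg2_output (D : nat) (x : nat -> D.-tuple R) (N Mmax : nat)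
  (fN beta : R) (Mhat : nat) (lhat : seq nat) : Prop :=
  exists (m : nat -> seq nat) (M : nat),
    (forall j, (j <= M)%N -> is_minimizer x N j (m j)) /\
    ((M = Mmax /\ forall j, (j <= Mmax)%N -> ~ small_segment N (m j) beta)
     \/ ((M.+1 <= Mmax)%N /\ is_minimizer x N M.+1 (m M.+1) /\
         small_segment N (m M.+1) beta /\
         forall j, (j <= M)%N -> ~ small_segment N (m j) beta)) /\
    (Mhat <= M)%N /\
    (forall j, (j <= M)%N ->
       cost x N (m Mhat) + Mhat%:R * fN <= cost x N (m j) + j%:R * fN) /\
    lhat = m Mhat.

Definition mutually_independent {d d'} {T : measurableType d}
  {T' : measurableType d'} (P : probability T R) (I : set nat)
  (Y : nat -> T -> T') : Prop :=
  (forall i, I i -> measurable_fun setT (Y i)) /\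
  forall (S : seq nat) (B : nat -> set T'),
    uniq S -> (forall i, i \in S -> I i) -> (forall i, measurable (B i)) ->
    P [set w | forall i, i \in S -> B i (Y i w)] =
      (\prod_(i <- S) fine (P (Y i @^-1` B i)))%:E.

Definition limsup_event {T : Type} (E : nat -> set T) : set T :=
  [set w | forall N0, exists N, (N0 <= N)%N /\ E N w].

End Defs.

(* Main.v *)
Require Import Defs.
From HB Require Import structures.
From mathcomp Require Import all_boot all_order all_algebra.
From mathcomp Require Import all_classical all_reals all_analysis.
Import Order.TTheory GRing.Theory Num.Theory.
Local Open Scope classical_set_scope.
Local Open Scope ring_scope.
From mathcomp Require Import ring lra zify.

Section Det.
Variable R : realType.

Lemma sq_shift (a b : nat) (y : nat -> R) (c : R) :
  \sum_(a <= n < b) (y n - (\sum_(a <= m < b) y m) / (b - a)%:R) ^+ 2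
  = \sum_(a <= n < b) (y n - c) ^+ 2
    - (\sum_(a <= n < b) (y n - c)) ^+ 2 / (b - a)%:R.
Proof.
have [ba|ab] := leqP b a.
  by rewrite !big_geq // expr0n /= mul0r subr0.
have k0 : (b - a)%:R != 0 :> R by rewrite pnatr_eq0 subn_eq0 -ltnNge.
have hs : \sum_(a <= n < b) (y n - c) = \sum_(a <= m < b) y m - c * (b - a)%:R.
  by rewrite sumrB sumr_const_nat mulr_natr.
rewrite hs.
move: hs; move: (\sum_(a <= m < b) y m) => s hs.
have -> : \sum_(a <= n < b) (y n - s / (b - a)%:R) ^+ 2
  = \sum_(a <= n < b) ((y n - c) ^+ 2 - 2 * (s / (b - a)%:R - c) * (y n - c)
       + (s / (b - a)%:R - c) ^+ 2).
  apply: eq_bigr => n _. move: (y n) (s / (b - a)%:R) => u v. ring.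
rewrite big_split /= sumrB -mulr_sumr hs sumr_const_nat.
rewrite -[(_ ^+ 2) *+ (b - a)]mulr_natr.
move: k0 hs; move: ((b - a)%:R) => k k0 _.
move: (\sum_(a <= n < b) (y n - c) ^+ 2) => q. by field.
Qed.


Lemma bnd (z p q : R) : 0 <= p -> p <= q -> (p = 0 -> z = 0) ->
  z ^+ 2 / q <= z ^+ 2 / p.
Proof.
move=> p0 pq pz.
have [p00|pn0] := eqVneq p 0; first by rewrite (pz p00) p00 expr0n /= !mul0r.
have pp : 0 < p by rewrite lt_def pn0.
have qp : 0 < q by apply: lt_le_trans pq.
apply: ler_wpM2l; first exact: sqr_ge0.
by rewrite lef_pV2 // posrE.
Qed.

Lemma sq3 (u v w : R) : (u + v + w) ^+ 2 <= 3 * (u ^+ 2 + v ^+ 2 + w ^+ 2).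
Proof.
have h : 0 <= (u - v) ^+ 2 + (v - w) ^+ 2 + (u - w) ^+ 2.
  by rewrite !addr_ge0 // sqr_ge0.
rewrite -subr_ge0.
have -> : 3 * (u ^+ 2 + v ^+ 2 + w ^+ 2) - (u + v + w) ^+ 2 =
  (u - v) ^+ 2 + (v - w) ^+ 2 + (u - w) ^+ 2 by ring.
exact: h.
Qed.

Lemma key3 (u d w p r s : R) : 0 < p -> 0 <= r -> p <= s -> r <= s ->
  (r = 0 -> w = 0) ->
  (u + p * d + w) ^+ 2 / s <= 3 * (u ^+ 2 / p + p * d ^+ 2 + w ^+ 2 / r).
Proof.
move=> p0 r0 ps rs rw.
have s0 : 0 < s by apply: lt_le_trans ps.
apply: le_trans (_ : 3 * (u ^+ 2 + (p * d) ^+ 2 + w ^+ 2) / s <= _).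
  by apply: ler_wpM2r; [rewrite invr_ge0 ltW | exact: sq3].
rewrite -mulrA ler_wpM2l // !mulrDl.
apply: lerD; first apply: lerD.
- by apply: bnd => //; [exact: ltW | move=> p00; move: p0; rewrite p00 ltxx].
- have -> : p * d ^+ 2 = (p * d) ^+ 2 / p.
    by field; rewrite gt_eqF.
  by apply: bnd => //; [exact: ltW | move=> p00; move: p0; rewrite p00 ltxx].
- exact: bnd.
Qed.

Lemma loss_shift (D : nat) (x : nat -> D.-tuple R) a b (c : D.-tuple R) :
  Loss_q x a b = \sum_(i < D) (\sum_(a <= n < b.+1) (tnth (x n) i - tnth c i) ^+ 2
     - (\sum_(a <= n < b.+1) (tnth (x n) i - tnth c i)) ^+ 2 / (b.+1 - a)%:R).
Proof.
rewrite /Loss_q /sqdist exchange_big /=; apply: eq_bigr => i _.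
rewrite -(sq_shift _ _ (fun n => tnth (x n) i)).
by apply: eq_bigr => n _; rewrite /seg_mean tnth_mktuple.
Qed.

Lemma split_sum (F : nat -> R) lo mid hi : (lo <= mid)%N -> (mid <= hi)%N ->
  \sum_(lo.+1 <= n < hi.+1) F n =
  \sum_(lo.+1 <= n < mid.+1) F n + \sum_(mid.+1 <= n < hi.+1) F n.
Proof. by move=> h1 h2; apply: big_cat_nat. Qed.

Lemma shift_m (y : nat -> R) lo hi m1 mk :
  \sum_(lo.+1 <= n < hi.+1) (y n - mk) =
  \sum_(lo.+1 <= n < hi.+1) (y n - m1) + (hi - lo)%:R * (m1 - mk).
Proof.
rewrite mulr_natl -(subSS lo hi) -sumr_const_nat -big_split /=.
by apply: eq_bigr => n _; rewrite addrA subrK.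
Qed.

Definition Ssum (y : nat -> R) lo hi m := \sum_(lo.+1 <= n < hi.+1) (y n - m).
Definition Qloss (y : nat -> R) lo hi m :=
  \sum_(lo.+1 <= n < hi.+1) (y n - m) ^+ 2 - (Ssum y lo hi m) ^+ 2 / (hi.+1 - lo.+1)%:R.

Lemma mix1 (y : nat -> R) (m1 mk m3 : R) (a0 l1 b l2 c n3 n1 n4 n2 : nat) :
  (1 <= n3)%N -> (1 <= n1)%N -> (1 <= n2)%N ->
  l1 = (a0 + n3)%N -> b = (l1 + n1)%N -> l2 = (b + n4)%N -> c = (l2 + n2)%N ->
  Qloss y a0 c mk - Qloss y a0 b mk - Qloss y b c mk <=
  3 * ((Ssum y a0 l1 m1) ^+ 2 / n3%:R + n3%:R * (m1 - mk) ^+ 2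
        + (Ssum y l1 b mk) ^+ 2 / n1%:R) +
  3 * ((Ssum y l2 c m3) ^+ 2 / n2%:R + n2%:R * (m3 - mk) ^+ 2
        + (Ssum y b l2 mk) ^+ 2 / n4%:R).
Proof.
move=> h3 h1 h2 e1 eb e2 ec.
have ab : (a0 <= b)%N by rewrite eb e1 -addnA leq_addr.
have bc : (b <= c)%N by rewrite ec e2 -addnA leq_addr.
rewrite /Qloss (split_sum _ _ _ _ ab bc).
have -> : Ssum y a0 c mk = Ssum y a0 b mk + Ssum y b c mk by rewrite /Ssum (split_sum _ _ _ _ ab bc).
set SA := Ssum y a0 b mk; set SB := Ssum y b c mk.
set TA := \sum_(a0.+1 <= n < b.+1) _; set TB := \sum_(b.+1 <= n < c.+1) _.
have -> : TA + TB - (SA + SB) ^+ 2 / (c.+1 - a0.+1)%:R - (TA - SA ^+ 2 / (b.+1 - a0.+1)%:R)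
   - (TB - SB ^+ 2 / (c.+1 - b.+1)%:R) =
   SA ^+ 2 / (b.+1 - a0.+1)%:R + SB ^+ 2 / (c.+1 - b.+1)%:R
   - (SA + SB) ^+ 2 / (c.+1 - a0.+1)%:R by ring.
apply: le_trans (_ : SA ^+ 2 / (b.+1 - a0.+1)%:R + SB ^+ 2 / (c.+1 - b.+1)%:R <= _).
  by rewrite lerBlDr lerDl divr_ge0 // sqr_ge0.
apply: lerD.
- have -> : SA = Ssum y a0 l1 m1 + n3%:R * (m1 - mk) + Ssum y l1 b mk.
    rewrite /SA /Ssum (split_sum _ _ _ _ (_ : (a0 <= l1)%N) (_ : (l1 <= b)%N)); last 2 first.
    + by rewrite e1 leq_addr.
    + by rewrite eb leq_addr.
    by rewrite (shift_m _ _ _ m1) e1 addKn.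
  have -> : (b.+1 - a0.+1)%:R = n3%:R + n1%:R :> R by rewrite subSS eb e1 -addnA addKn natrD.
  apply: key3.
  + by rewrite ltr0n.
  + by rewrite ler0n.
  + by rewrite lerDl ler0n.
  + by rewrite lerDr ler0n.
  + by move/eqP; rewrite pnatr_eq0 => /eqP n10; move: h1; rewrite n10.
- have -> : SB = Ssum y l2 c m3 + n2%:R * (m3 - mk) + Ssum y b l2 mk.
    rewrite /SB /Ssum (split_sum _ _ _ _ (_ : (b <= l2)%N) (_ : (l2 <= c)%N)); last 2 first.
    + by rewrite e2 leq_addr.
    + by rewrite ec leq_addr.
    rewrite (shift_m _ l2 _ m3) ec addKn. ring.
  have -> : (c.+1 - b.+1)%:R = n2%:R + n4%:R :> R
    by rewrite subSS ec e2 -addnA addKn natrD addrC.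
  apply: key3.
  + by rewrite ltr0n.
  + by rewrite ler0n.
  + by rewrite lerDl ler0n.
  + by rewrite lerDr ler0n.
  + move/eqP; rewrite pnatr_eq0 => /eqP n40.
    by rewrite /Ssum big_geq // e2 n40 addn0.
Qed.

Fixpoint pairsum (F : nat -> nat -> R) (s : seq nat) : R :=
  match s with
  | x :: ((y :: _) as t) => F x y + pairsum F t
  | _ => 0
  end.

Lemma sum_pairsum (F : nat -> nat -> R) (s : seq nat) :
  \sum_(j < (size s).-1) F (nth 0%N s j) (nth 0%N s j.+1) = pairsum F s.
Proof.
elim: s => [|x [|y t] IH]; first by rewrite big_ord0.
  by rewrite big_ord0.
have -> : pairsum F [:: x, y & t] = F x y + pairsum F (y :: t) by [].
by rewrite -IH big_ord_recl.
Qed.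

Lemma cost_pairsum (D : nat) (x : nat -> D.-tuple R) N l :
  cost x N l = pairsum (fun a b => Loss_q x a.+1 b) (bounds N l).
Proof.
rewrite -sum_pairsum /cost /bounds /= size_cat /= addn1.
by apply: eq_bigr.
Qed.

Lemma pairsum_cat F p x r :
  pairsum F (p ++ x :: r) = pairsum F (rcons p x) + pairsum F (x :: r).
Proof.
elim: p => [|y p IH]; first by rewrite /= add0r.
case: p IH => [|z p] IH; first by rewrite /= addr0.
have -> : pairsum F ((y :: z :: p) ++ x :: r) = F y z + pairsum F ((z :: p) ++ x :: r) by [].
have -> : pairsum F (rcons (y :: z :: p) x) = F y z + pairsum F (rcons (z :: p) x) by [].
by rewrite IH addrA.
Qed.

Lemma s_decomp (s : seq nat) j : (j.+2 < size s)%N ->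
  s = take j s ++ nth 0%N s j :: nth 0%N s j.+1 :: nth 0%N s j.+2 :: drop j.+3 s.
Proof.
move=> hj.
rewrite -(drop_nth 0%N) // -(drop_nth 0%N) ?(ltn_trans _ hj) //.
by rewrite -(drop_nth 0%N) ?(ltn_trans _ hj) // cat_take_drop.
Qed.

Lemma s'_decomp (s : seq nat) j : (j.+2 < size s)%N ->
  take j.+1 s ++ drop j.+2 s =
  take j s ++ nth 0%N s j :: nth 0%N s j.+2 :: drop j.+3 s.
Proof.
move=> hj.
rewrite (take_nth 0%N) ?(ltn_trans _ hj) // (drop_nth 0%N hj).
by rewrite cat_rcons.
Qed.

Lemma pairsum_remove F (s : seq nat) j : (j.+2 < size s)%N ->
  pairsum F s - pairsum F (take j.+1 s ++ drop j.+2 s) =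
  F (nth 0%N s j) (nth 0%N s j.+1) + F (nth 0%N s j.+1) (nth 0%N s j.+2)
  - F (nth 0%N s j) (nth 0%N s j.+2).
Proof.
move=> hj; rewrite (s'_decomp _ _ hj) {1}(s_decomp _ _ hj) !pairsum_cat.
move: (take j s) (drop j.+3 s) (nth 0%N s j) (nth 0%N s j.+1) (nth 0%N s j.+2) => p q a b c.
have -> : pairsum F [:: a, b, c & q] = F a b + (F b c + pairsum F (c :: q)) by [].
have -> : pairsum F [:: a, c & q] = F a c + pairsum F (c :: q) by [].
move: (pairsum F (rcons p a)) (pairsum F (c :: q)) => u v.
ring.
Qed.

Lemma bounds_remove N (l : seq nat) j : (j < size l)%N ->
  bounds N (take j l ++ drop j.+1 l) =
  take j.+1 (bounds N l) ++ drop j.+2 (bounds N l).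
Proof.
move=> hj; rewrite /bounds /= take_cat hj drop_cat.
case: ifP => h.
  by rewrite -catA.
have e : j.+1 = size l by apply/eqP; rewrite eqn_leq hj leqNgt h.
by rewrite -catA e subnn drop0 drop_size.
Qed.

Lemma mixvec (D : nat) (x : nat -> D.-tuple R) (m1 mk m3 : D.-tuple R) (tau : R)
  (a0 l1 b l2 c n3 n1 n2 : nat) :
  (1 <= n3)%N -> (1 <= n1)%N -> (1 <= n2)%N ->
  l1 = (a0 + n3)%N -> b = (l1 + n1)%N -> (b <= l2)%N -> c = (l2 + n2)%N ->
  (forall i : 'I_D, (Ssum (fun n => tnth (x n) i) a0 l1 (tnth m1 i)) ^+ 2 / n3%:R <= tau) ->
  (forall i : 'I_D, (Ssum (fun n => tnth (x n) i) l1 b (tnth mk i)) ^+ 2 / n1%:R <= tau) ->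
  (forall i : 'I_D, (Ssum (fun n => tnth (x n) i) b l2 (tnth mk i)) ^+ 2 / (l2 - b)%:R <= tau) ->
  (forall i : 'I_D, (Ssum (fun n => tnth (x n) i) l2 c (tnth m3 i)) ^+ 2 / n2%:R <= tau) ->
  Loss_q x a0.+1 c - Loss_q x a0.+1 b - Loss_q x b.+1 c <=
  12 * (D%:R * tau) + 3 * (n3%:R * sqdist m1 mk + n2%:R * sqdist mk m3).
Proof.
move=> h3 h1 h2 e1 eb bl2 ec g1 g2 g3 g4.
have LQ : forall lo hi, Loss_q x lo.+1 hi =
    \sum_(i < D) Qloss (fun n => tnth (x n) i) lo hi (tnth mk i).
  by move=> lo hi; rewrite (@loss_shift D x lo.+1 hi mk).
rewrite !LQ -!sumrB.
apply: le_trans (_ : \sum_(i < D) (3 * (tau + n3%:R * (tnth m1 i - tnth mk i) ^+ 2 + tau)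
    + 3 * (tau + n2%:R * (tnth mk i - tnth m3 i) ^+ 2 + tau)) <= _).
  apply: ler_sum => i _.
  have e2 : l2 = (b + (l2 - b))%N by rewrite subnKC.
  apply: le_trans (@mix1 _ (tnth m1 i) (tnth mk i) (tnth m3 i) _ _ _ _ _ _ _ _ _ h3 h1 h2 e1 eb e2 ec) _.
  apply: lerD; apply: ler_wpM2l => //.
    by apply: lerD; [apply: lerD => //; exact: g1 | exact: g2].
  apply: lerD; [apply: lerD; [exact: g4 | ] | exact: g3].
  by rewrite -opprB sqrrN.
rewrite le_eqVlt; apply/orP; left; apply/eqP.
have -> : \sum_(i < D) (3 * (tau + n3%:R * (tnth m1 i - tnth mk i) ^+ 2 + tau) +
     3 * (tau + n2%:R * (tnth mk i - tnth m3 i) ^+ 2 + tau)) =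
   \sum_(i < D) (12 * tau) + 3 * (n3%:R * \sum_(i < D) (tnth m1 i - tnth mk i) ^+ 2
     + n2%:R * \sum_(i < D) (tnth mk i - tnth m3 i) ^+ 2).
  rewrite [n3%:R * _]mulr_sumr [n2%:R * _]mulr_sumr -big_split /= mulr_sumr -big_split /=.
  by apply: eq_bigr => i _; ring.
by rewrite sumr_const card_ord -mulr_natl /sqdist; congr (_ + _); ring.
Qed.

Lemma subseq_remove (s : seq nat) j : (j.+1 < size s)%N ->
  subseq (take j.+1 s ++ drop j.+2 s) s.
Proof.
move=> hj.
have e : s = take j.+1 s ++ drop j.+1 s by rewrite cat_take_drop.
rewrite {3}e; apply: cat_subseq => //.
by rewrite (@drop_nth _ 0%N j.+1) // subseq_cons.
Qed.

Lemma det_main (D : nat) (x : nat -> D.-tuple R) N Mmax fN beta Mhat lhat j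
  (a0 l1 b l2 c n3 n1 n2 : nat) (m1 mk m3 : D.-tuple R) (tau : R) :
  Alg2_output x N Mmax fN beta Mhat lhat ->
  (j.+2 < size (bounds N lhat))%N ->
  nth 0%N (bounds N lhat) j = a0 ->
  nth 0%N (bounds N lhat) j.+1 = b ->
  nth 0%N (bounds N lhat) j.+2 = c ->
  (1 <= n3)%N -> (1 <= n1)%N -> (1 <= n2)%N ->
  l1 = (a0 + n3)%N -> b = (l1 + n1)%N -> (b <= l2)%N -> c = (l2 + n2)%N ->
  (forall i : 'I_D, (Ssum (fun n => tnth (x n) i) a0 l1 (tnth m1 i)) ^+ 2 / n3%:R <= tau) ->
  (forall i : 'I_D, (Ssum (fun n => tnth (x n) i) l1 b (tnth mk i)) ^+ 2 / n1%:R <= tau) ->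
  (forall i : 'I_D, (Ssum (fun n => tnth (x n) i) b l2 (tnth mk i)) ^+ 2 / (l2 - b)%:R <= tau) ->
  (forall i : 'I_D, (Ssum (fun n => tnth (x n) i) l2 c (tnth m3 i)) ^+ 2 / n2%:R <= tau) ->
  12 * (D%:R * tau) + 3 * (n3%:R * sqdist m1 mk + n2%:R * sqdist mk m3) < fN ->
  False.
Proof.
move=> [m [M [hmin [_ [hMhat [harg elhat]]]]]] hj ea eb' ec' h3 h1 h2 e1 eb bl2 ec
  g1 g2 g3 g4 hf.
have [[hsz hsort] _] := hmin Mhat hMhat.
rewrite -elhat in hsz hsort.
have jl : (j < size lhat)%N.
  by move: hj; rewrite /bounds /= size_cat /= addn1 ltnS ltnS.
set l' := take j lhat ++ drop j.+1 lhat.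
have Mpos : (0 < Mhat)%N by rewrite -hsz (leq_ltn_trans _ jl).
have vp : valid_partition N Mhat.-1 l'.
  split.
    by rewrite /l' size_cat size_take jl size_drop; move: jl; rewrite hsz; lia.
  rewrite /l' bounds_remove //.
  apply: (subseq_sorted ltn_trans _ hsort).
  exact: subseq_remove (ltn_trans _ hj).
have hM1 : (Mhat.-1 <= M)%N by apply: leq_trans (leq_pred _) hMhat.
have c1 := (hmin Mhat.-1 hM1).2 l' vp.
have c2 := harg Mhat.-1 hM1.
rewrite -elhat in c2.
have c3 : cost x N lhat + fN <= cost x N l'.
  apply: le_trans (_ : cost x N (m Mhat.-1) <= _) => //.
  move: c2; rewrite -{1}(prednK Mpos) mulrSr mulrDl mul1r.
  by move=> h; lra.
have cd := pairsum_remove (fun a b => Loss_q x a.+1 b) _ _ hj.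
have cd' : cost x N lhat - cost x N l' =
    Loss_q x a0.+1 b + Loss_q x b.+1 c - Loss_q x a0.+1 c.
  by rewrite !cost_pairsum /l' bounds_remove // cd ea eb' ec'.
have mv := @mixvec D x m1 mk m3 tau _ _ _ _ _ _ _ _ h3 h1 h2 e1 eb bl2 ec g1 g2 g3 g4.
have : fN <= Loss_q x a0.+1 c - Loss_q x a0.+1 b - Loss_q x b.+1 c.
  have -> : Loss_q x a0.+1 c - Loss_q x a0.+1 b - Loss_q x b.+1 c
      = cost x N l' - cost x N lhat.
    by rewrite -[cost x N l' - _]opprB cd'; ring.
  lra.
move=> hc; have := lt_le_trans (le_lt_trans mv hf) hc.
by rewrite ltxx.
Qed.

End Det.

Section Prob.
Variable R : realType.

Lemma msum d (T : measurableType d) (s : seq nat) (h : nat -> T -> R) :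
  (forall m, m \in s -> measurable_fun setT (h m)) ->
  measurable_fun setT (fun w => \sum_(m <- s) h m w).
Proof.
elim: s => [|a s IH] hm.
  by under eq_fun do rewrite big_nil; exact: measurable_cst.
under eq_fun do rewrite big_cons.
apply: measurable_realfun.measurable_funD.
  by apply: hm; rewrite mem_head.
by apply: IH => m ms; apply: hm; rewrite in_cons ms orbT.
Qed.

Lemma ev_meas d (T : measurableType d) (Z : nat -> T -> R) n (a mu0 : R) :
  (forall m, (1 <= m <= n)%N -> measurable_fun setT (Z m)) ->
  measurable [set w | a <= `|(\sum_(1 <= m < n.+1) Z m w) / n%:R - mu0|].
Proof.
move=> hZ.
have mS : measurable_fun setT (fun w => \sum_(1 <= m < n.+1) Z m w).
  apply: msum => m; rewrite mem_index_iota => hm; apply: hZ.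
  by move: hm; lia.
have mg : measurable_fun setT
    (fun w => `|(\sum_(1 <= m < n.+1) Z m w) / n%:R - mu0|).
  apply: measurableT_comp; first exact: measurable_realfun.normr_measurable.
  apply: measurable_realfun.measurable_funB; last exact: measurable_cst.
  by apply: measurable_realfun.measurable_funM => //; exact: measurable_cst.
have := mg measurableT _ (measurable_itv `[a, +oo[).
rewrite setTI; congr measurable; apply/seteqP; split => w /=;
  by rewrite in_itv /= andbT.
Qed.

Lemma meas_tnth_pre (D : nat) (i : 'I_D) (B : set R) : measurable B ->
  measurable [set v : D.-tuple R | B (tnth v i)].
Proof.
move=> mB; have := @measurable_tnth _ R D i measurableT B mB.
by rewrite setTI.
Qed.

Lemma indep_shift d (Omega : measurableType d) (P : probability Omega R) (D N : nat)
  (Y : nat -> Omega -> D.-tuple R) (i : 'I_D) p n :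
  mutually_independent P [set q | (1 <= q <= N)%N] Y -> (p + n <= N)%N ->
  mutually_independent P [set m | (1 <= m <= n)%N] (fun m w => tnth (Y (p + m)%N w) i).
Proof.
move=> [hm hp] hpn; split.
  move=> m /= hm'.
  have h1 : measurable_fun setT (Y (p + m)%N) by apply: hm => /=; lia.
  exact: (measurableT_comp (measurable_tnth i) h1).
move=> S B uS hS mB.
have := hp (map (addn p) S) (fun q => [set v | B (q - p)%N (tnth v i)]) _ _ _.
- have e1 : [set w | forall q, q \in map (addn p) S -> B (q - p)%N (tnth (Y q w) i)] =
      [set w | forall m, m \in S -> B m (tnth (Y (p + m)%N w) i)].
    apply/seteqP; split => w /= h m hm0.
      by have := h (p + m)%N (map_f _ hm0); rewrite addKn.
    by move: hm0 => /mapP [m1 hm1 ->]; rewrite addKn; exact: h.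
  rewrite /= e1 big_map => ->. apply: congr1; apply: eq_bigr => m _.
  by rewrite addKn.
- by rewrite map_inj_uniq //; exact: addnI.
- by move=> q /mapP [m ms ->]; have := hS m ms; rewrite /=; lia.
- by move=> q; exact: meas_tnth_pre.
Qed.

Lemma union_bound d (T : measurableType d) (mu : {measure set T -> \bar R})
  (I : Type) (s : seq I) (F : I -> set T) (c : R) :
  (forall x, measurable (F x)) -> (forall x, (mu (F x) <= c%:E)%E) ->
  measurable (\big[setU/set0]_(x <- s) F x) /\
  (mu (\big[setU/set0]_(x <- s) F x) <= ((size s)%:R * c)%:E)%E.
Proof.
move=> mF hc; elim: s => [|x s [m IH]].
  by rewrite big_nil measure0 mul0r; split => //; exact: measurable0.
rewrite big_cons; split; first exact: measurableU.
apply: le_trans (measureU2 _ _ _) _ => //.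
rewrite /= -addn1 natrD mulrDl mul1r EFinD addeC.
exact: leeD.
Qed.

Lemma telesum (K : R) m :
  \sum_(0 <= n < m.+1) (if n is 0 then 0 else K * (n%:R^-1 - n.+1%:R^-1))
  = K * (1 - m.+1%:R^-1).
Proof.
elim: m => [|m IH]; first by rewrite big_nat1 invr1 subrr mulr0.
rewrite big_nat_recr //= IH; ring.
Qed.

Lemma series_fin (u : nat -> \bar R) (K : R) : 0 <= K ->
  (forall n, (0 <= u n)%E) ->
  (forall n, (u n <= (if n is 0 then 0 else K * (n%:R^-1 - n.+1%:R^-1))%:E)%E) ->
  (\sum_(n <oo) u n < +oo)%E.
Proof.
move=> K0 u0 hu.
set v := fun n : nat => (if n is 0 then 0 else K * (n%:R^-1 - n.+1%:R^-1)).
have v0 : forall n, 0 <= v n.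
  case=> [|n] //=; rewrite mulr_ge0 // subr_ge0 lef_pV2 ?posrE ?ltr0n //.
  by rewrite ler_nat.
apply: (@le_lt_trans _ _ K%:E); last exact: ltry.
apply: le_trans (_ : \sum_(n <oo) (v n)%:E <= _)%E.
  by apply: lee_nneseries => // n _ _.
apply: lime_le.
  by apply: is_cvg_nneseries => n _ _; rewrite lee_fin.
apply: nearW => m.
rewrite sumEFin lee_fin.
case: m => [|m]; first by rewrite big_geq.
rewrite telesum; have h : 0 <= (m.+1%:R)^-1 :> R by rewrite invr_ge0.
by rewrite mulrBr mulr1 lerBlDr lerDl mulr_ge0.
Qed.

Lemma reindex_shift (g : nat -> R) p n :
  \sum_(p.+1 <= q < (p + n).+1) g q = \sum_(1 <= m < n.+1) g (p + m)%N.
Proof.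
elim: n => [|n IH]; first by rewrite addn0 !big_geq.
rewrite addnS big_nat_recr /=; last by rewrite ltnS leq_addr.
by rewrite IH [in RHS]big_nat_recr //= addnS.
Qed.

Lemma bigU_mem T (I : eqType) (s : seq I) (F : I -> set T) x w :
  x \in s -> F x w -> (\big[setU/set0]_(y <- s) F y) w.
Proof.
elim: s => // a s IH; rewrite in_cons big_cons => /orP [/eqP <- h| h1 h2].
  by left.
by right; apply: IH.
Qed.

Lemma exp_bound (c0 C fN : R) (D N : nat) : 0 < c0 -> 100 * D%:R / c0 < C ->
  C * ln N%:R <= fN -> (1 <= N)%N -> (1 <= D)%N ->
  2 * expR (- c0 * (fN / 25 / D%:R)) <= 2 * (N%:R ^+ 4)^-1.
Proof.
move=> c00 hC hf hN hD.
have Dp : 0 < D%:R :> R by rewrite ltr0n.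
have Np : 0 < N%:R :> R by rewrite ltr0n.
have l0 : 0 <= ln N%:R :> R by apply: ln_ge0; rewrite ler1n.
have hC' : 100 * D%:R < C * c0 by rewrite -ltr_pdivrMr.
set y := fN / 25 / D%:R.
have fy : fN = 25 * D%:R * y by rewrite /y; field; rewrite gt_eqF.
have key : 4 * ln N%:R <= c0 * y.
  have h1 : C * c0 * ln N%:R <= 25 * D%:R * y * c0.
    by rewrite -fy mulrAC ler_wpM2r // ltW.
  have h2 : 100 * D%:R * ln N%:R <= C * c0 * ln N%:R by rewrite ler_wpM2r // ltW.
  have h3 : 25 * D%:R * (4 * ln N%:R) <= 25 * D%:R * (c0 * y).
    have e : 25 * D%:R * (4 * ln N%:R) = 100 * D%:R * ln N%:R :> R by ring.
    have e2 : 25 * D%:R * y * c0 = 25 * D%:R * (c0 * y) by ring.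
    by rewrite e -e2; exact: le_trans h2 h1.
  by rewrite ler_pM2l // in h3; rewrite mulr_gt0.
apply: ler_wpM2l => //.
have -> : (N%:R ^+ 4)^-1 = expR (- (4 * ln N%:R)) :> R.
  by rewrite expRN expRM_natl lnK // posrE.
by rewrite ler_expR mulNr lerN2.
Qed.

Lemma poly_bound (n : nat) : (1 <= n)%N ->
  (n.+1%:R) ^+ 2 * (2 * (n%:R ^+ 4)^-1) <= 16 * (n%:R^-1 - n.+1%:R^-1) :> R.
Proof.
move=> hn.
have x1 : 1 <= n%:R :> R by rewrite ler1n.
have -> : n.+1%:R = n%:R + 1 :> R by rewrite -natr1.
move: x1; move: (n%:R : R) => x x1.
have x0 : 0 < x by apply: lt_le_trans x1.
have x10 : x + 1 != 0 by rewrite gt_eqF // addr_gt0.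
have -> : 16 * (x^-1 - (x + 1)^-1) = 16 / (x * (x + 1)).
  by field; rewrite x10 gt_eqF.
rewrite mulrA ler_pdivrMr ?exprn_gt0 //.
have -> : 16 / (x * (x + 1)) * x ^+ 4 = 16 * x ^+ 3 / (x + 1).
  by field; rewrite x10 gt_eqF.
rewrite ler_pdivlMr ?addr_gt0 //.
have e : 16 * x ^+ 3 - (x + 1) ^+ 2 * 2 * (x + 1) =
  2 * ((2 * x - (x + 1)) * ((2 * x) ^+ 2 + 2 * x * (x + 1) + (x + 1) ^+ 2)) by ring.
rewrite -subr_ge0 e; apply: mulr_ge0 => //; apply: mulr_ge0.
  by rewrite subr_ge0; lra.
by rewrite !addr_ge0 ?sqr_ge0 // !mulr_ge0 // ?addr_ge0 // ltW.
Qed.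

End Prob.

Theorem lemma6 (R : realType) (d : measure_display) (Omega : measurableType d)
  (P : probability Omega R) (D M0 : nat)
  (* X N n = X_n for sample size N, n = 1..N *)
  (X : nat -> nat -> Omega -> D.-tuple R)
  (* change points L N j, j = 0..M0+1 *)
  (L : nat -> nat -> nat)
  (G : nat -> probability (D.-tuple R) R) (mu : nat -> D.-tuple R)
  (c0 C : R) (Mmax : nat -> nat) (f : nat -> R) (beta : nat -> R)
  (k : nat) (eta : nat -> nat) (N0 : nat) :
  (1 < M0)%N ->
  (* model (M.2), for all sample sizes N >= N0 *)
  (forall N, (N0 <= N)%N ->
     [/\ L N 0%N = 0%N, L N M0.+1 = N & forall j, (j <= M0)%N -> (L N j < L N j.+1)%N]) ->
  (forall j, (1 <= j <= M0.+1)%N ->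
     forall m : nat, exists N1, forall N, (N1 <= N)%N -> (m <= L N j - L N j.-1)%N) ->
  (forall N, (N0 <= N)%N ->
     mutually_independent P [set n | (1 <= n <= N)%N] (X N)) ->
  (forall N, (N0 <= N)%N -> forall j, (1 <= j <= M0.+1)%N ->
     forall n, (L N j.-1 < n <= L N j)%N ->
     forall B, measurable B -> P (X N n @^-1` B) = G j B) ->
  (forall j, (1 <= j <= M0.+1)%N -> forall i : 'I_D,
     (G j).-integrable setT (fun v => (tnth v i ^+ 2)%:E) /\
     (\int[G j]_v (tnth v i)%:E = (tnth (mu j) i)%:E)%E) ->
  (forall j, (1 <= j <= M0)%N -> mu j <> mu j.+1) ->
  (* (A.4) *)
  0 < c0 ->
  (forall j, (1 <= j <= M0.+1)%N -> forall (i : 'I_D) (n : nat) (a : R),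
     (1 <= n)%N -> 0 < a ->
     forall (d' : measure_display) (T : measurableType d') (Q : probability T R)
            (Z : nat -> T -> R),
       mutually_independent Q [set m | (1 <= m <= n)%N] Z ->
       (forall m, (1 <= m <= n)%N -> forall B, measurable B ->
          Q (Z m @^-1` B) = G j [set v | B (tnth v i)]) ->
       (Q [set w | (a <= `|(\sum_(1 <= m < n.+1) Z m w) / n%:R - tnth (mu j) i|)%R]
         <= (2 * expR (- c0 * a ^+ 2 * n%:R))%:E)%E) ->
  (* Algorithm 2 inputs *)
  (forall N, (1 <= Mmax N)%N) ->
  (forall N, 0 < f N) ->
  (* k, eta, penalty *)
  (2 <= k <= M0)%N ->
  (forall N, (N0 <= N)%N ->
     (1 <= eta N)%N /\ (eta N <= minn (L N k.-1 - L N (k.-2)) (L N k.+1 - L N k))%N) ->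
  100 * D%:R / c0 < C ->
  (forall N, (N0 <= N)%N ->
     Num.max (100 * sqdist (mu k.-1) (mu k) * (eta N)%:R)
       (Num.max (100 * sqdist (mu k) (mu k.+1) * (eta N)%:R) (C * ln N%:R)) <= f N) ->
  P.-negligible (limsup_event (fun N => [set w |
     exists (Mhat : nat) (lhat : seq nat),
       Alg2_output (fun n => X N n w) N (Mmax N) (f N) (beta N) Mhat lhat /\
       exists n1 n2 n3 : nat,
         [/\ (1 <= n1 <= L N k - L N k.-1)%N, (1 <= n2 <= eta N)%N,
             (1 <= n3 <= eta N)%N &
             exists j, [/\ (j.+2 < size (bounds N lhat))%N,
                 nth 0%N (bounds N lhat) j = (L N k.-1 - n3)%N,
                 nth 0%N (bounds N lhat) j.+1 = (L N k.-1 + n1)%N &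
                 nth 0%N (bounds N lhat) j.+2 = (L N k + n2)%N]]])).
Proof.
move=> hM0 hL hsz hind hlaw hint hmu hc0 hA4 hMmax hf hk heta hC hpen.
have D0 : (1 <= D)%N.
  case: (posnP D) => [D0|//]; exfalso.
  subst D; apply: (hmu 1%N); first by rewrite /=; lia.
  by rewrite (tuple0 (mu 1%N)) (tuple0 (mu 2%N)).
have Lmono : forall N, (N0 <= N)%N -> forall a b, (a <= b)%N -> (b <= M0.+1)%N ->
    (L N a <= L N b)%N.
  move=> N hN a b ab hb; elim: b ab hb => [|b IH] ab hb.
    by move: ab; rewrite leqn0 => /eqP ->.
  move: ab; rewrite leq_eqVlt => /orP [/eqP -> //| ab].
  have [_ _ h] := hL N hN.
  exact: leq_trans (IH ab (ltnW hb)) (ltnW (h b hb)).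
have LN : forall N, (N0 <= N)%N -> forall j, (j <= M0.+1)%N -> (L N j <= N)%N.
  move=> N hN j hj; have [_ e _] := hL N hN.
  by rewrite -{2}e; apply: Lmono.
have hfC : forall N, (N0 <= N)%N -> C * ln N%:R <= f N.
  move=> N hN; have := hpen N hN; rewrite !ge_max => /andP [_ /andP [_ h]].
  exact: h.
pose tau N := f N / 25 / D%:R.
pose aa N n := Num.sqrt (tau N / n%:R).
pose cond N j p n := [&& (N0 <= N)%N, (1 <= j <= M0.+1)%N, (1 <= n)%N,
   (L N j.-1 <= p)%N & (p + n <= L N j)%N].
pose GG N j (i : 'I_D) p n : set Omega := if cond N j p n then
  [set w | aa N n <= `|(\sum_(1 <= m < n.+1) tnth (X N (p + m)%N w) i) / n%:R
     - tnth (mu j) i|] else set0.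
have taup : forall N, 0 < tau N.
  by move=> N; rewrite /tau !divr_gt0 // ltr0n.
have hGm : forall N j i p n, measurable (GG N j i p n) /\
    ((1 <= N)%N -> (P (GG N j i p n) <= (2 * (N%:R ^+ 4)^-1)%:E)%E).
  move=> N j i p n; rewrite /GG; case: ifP => [/and5P [hN hj hn hp hpn]|_]; last first.
    split; first exact: measurable0.
    by move=> _; rewrite measure0 lee_fin mulr_ge0 // invr_ge0 exprn_ge0.
  have pnN : (p + n <= N)%N.
    by apply: leq_trans hpn (LN N hN j _); case/andP: hj.
  have hI := @indep_shift R _ _ P D N (X N) i p n (hind N hN) pnN.
  split.
    by apply: ev_meas => m hm; exact: hI.1 m hm.
  move=> N1p.
  have aap : 0 < aa N n by rewrite /aa sqrtr_gt0 divr_gt0 // ltr0n.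
  have hmg : forall m, (1 <= m <= n)%N -> forall B, measurable B ->
      P ((fun w => tnth (X N (p + m)%N w) i) @^-1` B) = G j [set v | B (tnth v i)].
    move=> m hm B mB.
    apply: (hlaw N hN j hj (p + m)%N _ _ (@meas_tnth_pre R D i B mB)).
    by move: hm hp hpn; lia.
  have := hA4 j hj i n (aa N n) hn aap _ _ P (fun m w => tnth (X N (p + m)%N w) i) hI hmg.
  move/le_trans; apply.
    rewrite lee_fin.
    have -> : - c0 * aa N n ^+ 2 * n%:R = - c0 * tau N.
      rewrite /aa sqr_sqrtr ?divr_ge0 ?ler0n ?ltW // -mulrA divfK //.
      by rewrite pnatr_eq0 -lt0n.
    exact: exp_bound hc0 hC (hfC N hN) N1p D0.
pose Bad N := \big[setU/set0]_(j <- iota 0 M0.+2) \big[setU/set0]_(i <- enum 'I_D)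
   \big[setU/set0]_(p <- iota 0 N.+1) \big[setU/set0]_(n <- iota 0 N.+1) GG N j i p n.
have hBad : forall N, (1 <= N)%N -> measurable (Bad N) /\
    (P (Bad N) <= ((16 * M0.+2%:R * D%:R) * (N%:R^-1 - N.+1%:R^-1))%:E)%E.
  move=> N hN1.
  have h4 : forall j i p, measurable (\big[setU/set0]_(n <- iota 0 N.+1) GG N j i p n) /\
     (P (\big[setU/set0]_(n <- iota 0 N.+1) GG N j i p n) <=
        ((size (iota 0 N.+1))%:R * (2 * (N%:R ^+ 4)^-1))%:E)%E.
    move=> j i p; apply: union_bound => n.
      exact: (hGm N j i p n).1.
    exact: (hGm N j i p n).2 hN1.
  have h3 : forall j i, measurable (\big[setU/set0]_(p <- iota 0 N.+1)
       \big[setU/set0]_(n <- iota 0 N.+1) GG N j i p n) /\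
     (P (\big[setU/set0]_(p <- iota 0 N.+1) \big[setU/set0]_(n <- iota 0 N.+1) GG N j i p n) <=
        ((size (iota 0 N.+1))%:R * ((size (iota 0 N.+1))%:R * (2 * (N%:R ^+ 4)^-1)))%:E)%E.
    move=> j i; apply: union_bound => p.
      exact: (h4 j i p).1.
    exact: (h4 j i p).2.
  have h2 : forall j, measurable (\big[setU/set0]_(i <- enum 'I_D) \big[setU/set0]_(p <- iota 0 N.+1)
       \big[setU/set0]_(n <- iota 0 N.+1) GG N j i p n) /\
     (P (\big[setU/set0]_(i <- enum 'I_D) \big[setU/set0]_(p <- iota 0 N.+1) \big[setU/set0]_(n <- iota 0 N.+1) GG N j i p n) <=
        ((size (enum 'I_D))%:R * ((size (iota 0 N.+1))%:R * ((size (iota 0 N.+1))%:R * (2 * (N%:R ^+ 4)^-1))))%:E)%E.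
    move=> j; apply: union_bound => i.
      exact: (h3 j i).1.
    exact: (h3 j i).2.
  have [m1 b1] := @union_bound R _ _ P _ (iota 0 M0.+2) _ _ (fun j => (h2 j).1) (fun j => (h2 j).2).
  split; first exact: m1.
  apply: le_trans b1 _; rewrite lee_fin !size_iota size_enum_ord.
  have pb := @poly_bound R N hN1.
  have e1 : M0.+2%:R * (D%:R * (N.+1%:R * (N.+1%:R * (2 * (N%:R ^+ 4)^-1))))
     = (M0.+2%:R * D%:R) * (N.+1%:R ^+ 2 * (2 * (N%:R ^+ 4)^-1)) :> R by ring.
  have e2 : 16 * M0.+2%:R * D%:R * (N%:R^-1 - N.+1%:R^-1)
     = (M0.+2%:R * D%:R) * (16 * (N%:R^-1 - N.+1%:R^-1)) :> R by ring.
  by rewrite e1 e2; apply: ler_wpM2l => //; rewrite mulr_ge0.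
pose N1 := maxn N0 1.
pose F N := if (N1 <= N)%N then Bad N else set0.
have hFm : forall N, measurable (F N).
  move=> N; rewrite /F; case: ifP => h; last exact: measurable0.
  by have [mb _] := hBad N (leq_trans (leq_maxr N0 1) h).
have hsum : (\sum_(n <oo) P (F n) < +oo)%E.
  apply: (@series_fin R _ (16 * M0.+2%:R * D%:R)) => //.
  move=> [|n].
    by rewrite /F ifF ?measure0 //; rewrite geq_max ltnn andbF.
  rewrite /F; case: ifP => h.
    by have [_ bb] := hBad n.+1 isT.
  rewrite measure0 lee_fin mulr_ge0 // subr_ge0 lef_pV2 ?posrE ?ltr0n //.
  by rewrite ler_nat.
have h0 := lim_sup_set_cvg0 hFm hsum.
exists (lim_sup_set F); split => //.
  rewrite /lim_sup_set; apply: bigcap_measurable; first by exists 0%N.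
  by move=> kk _; apply: bigcup_measurable => jj _; exact: hFm.
move=> w hw n0 _.
have [N [hN EN]] := hw (maxn n0 N1).
exists N; first by move: hN; rewrite geq_max => /andP [].
have hN1 : (N1 <= N)%N by move: hN; rewrite geq_max => /andP [].
have hN0 : (N0 <= N)%N by move: hN1; rewrite geq_max => /andP [].
rewrite /F hN1.
apply: contrapT => nB.
have hgood : forall j (i : 'I_D) p n q, q = (p + n)%N ->
    (1 <= j <= M0.+1)%N -> (1 <= n)%N -> (L N j.-1 <= p)%N -> (p + n <= L N j)%N ->
    (Ssum R (fun r => tnth (X N r w) i) p q (tnth (mu j) i)) ^+ 2 / n%:R <= tau N.
  move=> j i p n q -> hj hn hp hpn.
  have hc : cond N j p n by apply/and5P.
  have hjN : (L N j <= N)%N by apply: LN => //; case/andP: hj.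
  have nG : ~ GG N j i p n w.
    move=> hG; apply: nB.
    apply: (@bigU_mem _ _ _ _ j); first by rewrite mem_iota /=; move: hj; lia.
    apply: (@bigU_mem _ _ _ _ i); first by rewrite mem_enum.
    apply: (@bigU_mem _ _ _ _ p); first by rewrite mem_iota /=; move: hpn hjN; lia.
    apply: (@bigU_mem _ _ _ _ n); first by rewrite mem_iota /=; move: hpn hjN; lia.
    exact: hG.
  rewrite /GG hc in nG.
  set S := \sum_(1 <= m < n.+1) tnth (X N (p + m)%N w) i in nG.
  set z := S / n%:R - tnth (mu j) i in nG.
  have lt : `|z| < aa N n by rewrite ltNge; apply/negP.
  have nz : n%:R != 0 :> R by rewrite pnatr_eq0 -lt0n.
  have e : Ssum R (fun r => tnth (X N r w) i) p (p + n) (tnth (mu j) i) = n%:R * z.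
    rewrite /Ssum (@reindex_shift R (fun r => tnth (X N r w) i - tnth (mu j) i)) sumrB.
    rewrite sumr_const_nat subSS subn0 -/S /z -mulr_natl.
    by field.
  rewrite e.
  have hz : z ^+ 2 <= aa N n ^+ 2.
    rewrite -real_normK ?num_real //.
    by rewrite !expr2 ler_pM // ltW.
  have e2 : (n%:R * z) ^+ 2 / n%:R = n%:R * z ^+ 2 by field.
  have h5 : n%:R * aa N n ^+ 2 = tau N.
    by rewrite /aa sqr_sqrtr ?divr_ge0 ?ler0n ?ltW // mulrC divfK.
  by rewrite e2 -h5 ler_wpM2l.
case: EN => Mhat [lhat [halg [n1 [n2 [n3 [hn1 hn2 hn3 [j [hj ea eb ec]]]]]]]].
have [he1 he2] := heta N hN0.
move: hn1 hn2 hn3 => /andP [hn1a hn1b] /andP [hn2a hn2b] /andP [hn3a hn3b].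
move: he2; rewrite leq_min => /andP [he2a he2b].
move: (hk) => /andP [hk2 hkM].
have L12 : (L N k.-2 <= L N k.-1)%N.
  by apply: Lmono => //; [exact: leq_pred | lia].
have L23 : (L N k.-1 <= L N k)%N by apply: Lmono => //; [exact: leq_pred | lia].
have L34 : (L N k <= L N k.+1)%N by apply: Lmono => //; lia.
apply: (@det_main R D (fun q => X N q w) N (Mmax N) (f N) (beta N) Mhat lhat j
   (L N k.-1 - n3) (L N k.-1) (L N k.-1 + n1) (L N k) (L N k + n2) n3 n1 n2
   (mu k.-1) (mu k) (mu k.+1) (tau N) halg hj ea eb ec hn3a hn1a hn2a _ erefl _ erefl).
- by lia.
- by lia.
- move=> i; apply: (hgood k.-1 i (L N k.-1 - n3)%N n3) => //; lia.
- move=> i; apply: (hgood k i (L N k.-1) n1) => //; lia.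
- move=> i; case: (posnP (L N k - (L N k.-1 + n1))) => [hz0|hpos].
    have e : L N k = (L N k.-1 + n1)%N by lia.
    rewrite e /Ssum big_geq // expr0n /= mul0r; exact: ltW.
  apply: (hgood k i (L N k.-1 + n1)%N (L N k - (L N k.-1 + n1))%N) => //; lia.
- move=> i; apply: (hgood k.+1 i (L N k) n2) => //; lia.
have s1 : 0 <= sqdist (mu k.-1) (mu k) by apply: sumr_ge0 => i _; exact: sqr_ge0.
have s2 : 0 <= sqdist (mu k) (mu k.+1) by apply: sumr_ge0 => i _; exact: sqr_ge0.
have := hpen N hN0; rewrite !ge_max => /andP [p1 /andP [p2 _]].
have q1 : n3%:R * sqdist (mu k.-1) (mu k) <= (eta N)%:R * sqdist (mu k.-1) (mu k).
  by rewrite ler_wpM2r // ler_nat.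
have q2 : n2%:R * sqdist (mu k) (mu k.+1) <= (eta N)%:R * sqdist (mu k) (mu k.+1).
  by rewrite ler_wpM2r // ler_nat.
have hDt : D%:R * tau N = f N / 25.
  by rewrite /tau; field; rewrite pnatr_eq0 -lt0n.
rewrite hDt; have fp := hf N.
lra.
Qed.
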